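(* With the notation of the context, if $B\subseteq H$ is a set that is non-meager with respect to $\tau$ and has the Baire property with respect to $\tau$, then for every $m\in\omega$ there are distinct $x,y\in P_m$ such that $(B+x)\cap(B+y)\neq\emptyset$.
   Context: Work in $2^\omega$ with coordinatewise addition mod 2 (also used for finite 0-1 sequences of equal domain). Fix integers $0=n_0<n_1<n_2<\cdots$ and sets $C_i\subseteq 2^{[n_i,n_{i+1})}$ such that for every $i$ and all $s_0,\ldots,s_{n_i}\in 2^{[n_i,n_{i+1})}$ both $\bigcap_{k\le n_i}(C_i+s_k)$ and $\bigcap_{k\le n_i}((2^{[n_i,n_{i+1})}\setminus C_i)+s_k)$ are nonempty. Let $H=\{x\in 2^\omega: x\restriction[n_i,n_{i+1})\in C_i \text{ for all } i\}$. Fix a sequence $\langle P_m:m\in\omega\rangle$ of nonempty perfect subsets of $2^\omega$; let $P_m^*=\{x+y:x,y\in P_m\}$ and $T_m^*=\{x\restriction k: x\in P_m^*, k\in\omega\}$. A tree mapping with domain $n\ge1$ is a partial function $\pi$ from $\{(k,\ell):k<\ell<n\}$ to $\omega$ such that for every $0<\ell<n$ there is exactly one $k<\ell$ with $\pi(k,\ell)$ defined. A finite sequence $s$ is acceptable if ${\rm dom}(s)=n_i$ for some $i$ and $s\restriction[n_j,n_{j+1})\in C_j$ for all $j<i$. $S$ is the set of all $\rho=\langle\pi,s_0,\ldots,s_{n-1}\rangle$ where $n=n(\rho)\ge1$, $\pi$ is a tree mapping with domain $n$, the $s_j$ are acceptable with a common domain $n_i$ with $n_i\ge n$ (put $i(\rho)=i$),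 and $s_k+s_\ell\in T^*_{\pi(k,\ell)}$ whenever $\pi(k,\ell)$ is defined. For $\rho=\langle\pi,s_0,\ldots,s_{n-1}\rangle\in S$, $U(\rho)$ is the set of $x_0\in H$ for which there are $x_1,\ldots,x_{n-1}\in H$ with each $s_j$ an initial segment of $x_j$ and $\langle\pi,x_0\restriction n_j,\ldots,x_{n-1}\restriction n_j\rangle\in S$ for all $j>i(\rho)$. The sets $U(\rho)$, $\rho\in S$, form a basis of a topology $\tau$ on $H$. For $B\subseteq 2^\omega$ and $x\in2^\omega$, $B+x=\{b+x:b\in B\}$. *)

(* Defs.v *)
From Stdlib Require Import Arith Bool.

Definition cantor := nat -> bool.
Definition cset := cantor -> Prop.

Definition cadd (x y : cantor) : cantor := fun k => xorb (x k) (y k).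

Definition translate (B : cset) (x : cantor) : cset :=
  fun z => exists b, B b /\ z = cadd b x.

Definition agree (N : nat) (x y : cantor) : Prop := forall k, k < N -> x k = y k.

Definition cantor_closed (P : cset) : Prop :=
  forall x, ~ P x -> exists N, forall y, agree N x y -> ~ P y.
Definition no_isolated (P : cset) : Prop :=
  forall x N, P x -> exists y, P y /\ y <> x /\ agree N x y.
Definition perfect_nonempty (P : cset) : Prop :=
  (exists x, P x) /\ cantor_closed P /\ no_isolated P.

Section Construction.
Variable nb : nat -> nat.
(* An element of 2^[n_i, n_{i+1}) is coded by its extension by zero;
   C i is a predicate on such codes, so C_i is an arbitrary subset of
   2^[n_i, n_{i+1}). *)
Variable C : nat -> cset.
Variable P : nat -> cset.

Definition restr_int (i : nat) (s : cantor) : cantor :=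
  fun k => if (nb i <=? k) && (k <? nb (S i)) then s k else false.

Definition memC (i : nat) (s : cantor) : Prop := C i (restr_int i s).

Definition H : cset := fun x => forall i, memC i x.

Definition Pstar (m : nat) : cset :=
  fun z => exists x y, P m x /\ P m y /\ z = cadd x y.

(* the finite sequence s|N belongs to T*_m *)
Definition inTstar (m N : nat) (s : cantor) : Prop :=
  exists z, Pstar m z /\ agree N z s.

Definition tree_mapping (nn : nat) (pi : nat -> nat -> option nat) : Prop :=
  (forall k l, pi k l <> None -> k < l /\ l < nn) /\
  (forall l, 0 < l -> l < nn ->
     exists k, k < l /\ pi k l <> None /\
       forall k', k' < l -> pi k' l <> None -> k' = k).

Definition acceptable (i : nat) (s : cantor) : Prop :=
  forall j, j < i -> memC j s.

(* rho = <pi, s_0|n_i, ..., s_{nn-1}|n_i> in S, with i(rho) = i *)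
Definition inS (nn : nat) (pi : nat -> nat -> option nat)
  (s : nat -> cantor) (i : nat) : Prop :=
  1 <= nn /\ tree_mapping nn pi /\ nn <= nb i /\
  (forall j, j < nn -> acceptable i (s j)) /\
  (forall k l m, pi k l = Some m -> inTstar m (nb i) (cadd (s k) (s l))).

Definition U (nn : nat) (pi : nat -> nat -> option nat)
  (s : nat -> cantor) (i : nat) : cset :=
  fun x0 => H x0 /\
    exists xs : nat -> cantor, xs 0 = x0 /\
      (forall j, j < nn -> H (xs j)) /\
      (forall j, j < nn -> agree (nb i) (xs j) (s j)) /\
      (forall j, i < j -> inS nn pi xs j).

Definition subset (A B : cset) : Prop := forall x, A x -> B x.

Definition tau_open (O : cset) : Prop :=
  subset O H /\
  forall x, O x -> exists nn pi s i,
    inS nn pi s i /\ U nn pi s i x /\ subset (U nn pi s i) O.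

Definition tau_closure (A : cset) : cset :=
  fun x => H x /\ forall O, tau_open O -> O x -> exists y, O y /\ A y.

Definition tau_interior (A : cset) : cset :=
  fun x => exists O, tau_open O /\ O x /\ subset O A.

Definition tau_nowhere_dense (A : cset) : Prop :=
  forall x, ~ tau_interior (tau_closure A) x.

Definition tau_meager (A : cset) : Prop :=
  exists F : nat -> cset, (forall k, tau_nowhere_dense (F k)) /\
    subset A (fun x => exists k, F k x).

Definition symdiff (A B : cset) : cset :=
  fun x => (A x /\ ~ B x) \/ (B x /\ ~ A x).

Definition tau_baire_property (A : cset) : Prop :=
  exists O, tau_open O /\ tau_meager (symdiff A O).

End Construction.

(* Main.v *)
Require Import Defs.
From Stdlib Require Import Arith Lia Bool Classical FunctionalExtensionality IndefiniteDescription.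

Lemma fchoice {A B : Type} (R : A -> B -> Prop) :
  (forall a, exists b, R a b) -> exists f : A -> B, forall a, R a (f a).
Proof.
  intros h. exists (fun a => proj1_sig (constructive_indefinite_description _ (h a))).
  intro a. exact (proj2_sig (constructive_indefinite_description _ (h a))).
Qed.

Lemma agree_mono N M x y : N <= M -> agree M x y -> agree N x y.
Proof. intros h1 h2 k hk. apply h2. lia. Qed.
Lemma agree_sym N x y : agree N x y -> agree N y x.
Proof. intros h k hk. symmetry. auto. Qed.
Lemma agree_trans N x y z : agree N x y -> agree N y z -> agree N x z.
Proof. intros h1 h2 k hk. rewrite h1; auto. Qed.



Definition upd (u : cantor) (L : nat) (b : bool) : cantor := fun t => if t =? L then b else u t.

Section K.
Variable Q : cset.
Hypothesis hQ : cantor_closed Q.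
Variable w : cantor.
Hypothesis hw : forall N, exists p q, Q p /\ Q q /\ agree N (cadd p q) w.

Definition good L u v := forall N, exists p q, Q p /\ Q q /\ agree L p u /\ agree L q v /\ agree N (cadd p q) w.

Lemma good_step L u v : good L u v -> exists b : bool * bool, good (S L) (upd u L (fst b)) (upd v L (snd b)).
Proof.
  intros hg. apply NNPP. intro hn.
  assert (hb : forall b1 b2, exists N, forall p q, Q p -> Q q -> agree (S L) p (upd u L b1) ->
     agree (S L) q (upd v L b2) -> agree N (cadd p q) w -> False).
  { intros b1 b2. apply NNPP. intro h2. apply hn. exists (b1, b2). intro N. simpl.
    apply NNPP. intro h3. apply h2. exists N. intros p q hp hq h4 h5 h6. apply h3. exists p, q; repeat split; auto. }
  destruct (hb true true) as [N1 h1]. destruct (hb true false) as [N2 h2].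
  destruct (hb false true) as [N3 h3]. destruct (hb false false) as [N4 h4].
  destruct (hg (N1 + N2 + N3 + N4)) as [p [q [hp [hq [hpu [hqv ha]]]]]].
  assert (e1 : agree (S L) p (upd u L (p L))).
  { intros k hk. unfold upd. destruct (Nat.eqb_spec k L). subst; auto. apply hpu. lia. }
  assert (e2 : agree (S L) q (upd v L (q L))).
  { intros k hk. unfold upd. destruct (Nat.eqb_spec k L). subst; auto. apply hqv. lia. }
  destruct (p L) eqn:ep, (q L) eqn:eq; rewrite ?ep, ?eq in e1, e2.
  - apply (h1 p q hp hq e1 e2). eapply agree_mono; [|exact ha]. lia.
  - apply (h2 p q hp hq e1 e2). eapply agree_mono; [|exact ha]. lia.
  - apply (h3 p q hp hq e1 e2). eapply agree_mono; [|exact ha]. lia.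
  - apply (h4 p q hp hq e1 e2). eapply agree_mono; [|exact ha]. lia.
Qed.

Lemma closed_sum : exists p q, Q p /\ Q q /\ forall t, cadd p q t = w t.
Proof.
  destruct (fchoice (fun (x : nat * cantor * cantor) (b : bool * bool) =>
     let '(L, u, v) := x in good L u v -> good (S L) (upd u L (fst b)) (upd v L (snd b)))) as [nx hnx].
  { intros [[L u] v]. destruct (classic (good L u v)) as [hg|hg].
    - destruct (good_step _ _ _ hg) as [b hb]. exists b. auto.
    - exists (true, true). intro; contradiction. }
  set (br := fix br (L : nat) : cantor * cantor := match L with
     | 0 => (fun _ => false, fun _ => false)
     | S L' => let '(u, v) := br L' in let b := nx (L', u, v) in (upd u L' (fst b), upd v L' (snd b)) end).
  assert (hgood : forall L, good L (fst (br L)) (snd (br L))).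
  { induction L.
    - intro N. destruct (hw N) as [p [q [hp [hq ha]]]]. exists p, q. repeat split; auto; intros k hk; lia.
    - simpl. destruct (br L) as [u v] eqn:e. simpl in IHL. specialize (hnx (L, u, v)). simpl in hnx. auto. }
  assert (hst : forall t L, t < L -> fst (br L) t = fst (br (S t)) t /\ snd (br L) t = snd (br (S t)) t).
  { intros t L. induction L; intros h. lia.
    destruct (Nat.eq_dec t L). subst; auto.
    assert (ht : t < L) by lia. specialize (IHL ht).
    simpl. destruct (br L) as [u v] eqn:e. simpl in *. unfold upd.
    destruct (Nat.eqb_spec t L). lia. exact IHL. }
  set (ps := fun t => fst (br (S t)) t). set (qs := fun t => snd (br (S t)) t).
  assert (hag : forall L, agree L ps (fst (br L)) /\ agree L qs (snd (br L))).
  { intro L. split; intros k hk; unfold ps, qs; symmetry; apply hst; auto. }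
  exists ps, qs. split; [|split].
  - apply NNPP. intro hn. destruct (hQ _ hn) as [N hN].
    destruct (hgood N 0) as [p [q [hp [_ [hpu _]]]]].
    apply (hN p); auto. eapply agree_trans. apply (proj1 (hag N)). apply agree_sym; auto.
  - apply NNPP. intro hn. destruct (hQ _ hn) as [N hN].
    destruct (hgood N 0) as [p [q [_ [hq [_ [hqv _]]]]]].
    apply (hN q); auto. eapply agree_trans. apply (proj2 (hag N)). apply agree_sym; auto.
  - intro t. destruct (hgood (S t) (S t)) as [p [q [_ [_ [hpu [hqv ha]]]]]].
    rewrite <- ha by lia. unfold cadd. f_equal.
    + unfold ps. symmetry. apply hpu. lia.
    + unfold qs. symmetry. apply hqv. lia.
Qed.
End K.

Section Main.
Variable nb : nat -> nat.
Variable C : nat -> cset.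
Variable P : nat -> cset.
Hypothesis hn0 : nb 0 = 0.
Hypothesis hninc : forall i, nb i < nb (S i).
Hypothesis hCin : forall (i : nat) (s : nat -> cantor),
      exists t, forall k, k <= nb i -> memC nb C i (cadd t (s k)).
Hypothesis hP : forall m, perfect_nonempty (P m).

Lemma nb_lt i j : i < j -> nb i < nb j.
Proof. induction j; intros h. lia. destruct (Nat.eq_dec i j). subst; auto.
  specialize (hninc j). assert (nb i < nb j) by (apply IHj; lia). lia. Qed.
Lemma nb_mono i j : i <= j -> nb i <= nb j.
Proof. intros h. destruct (Nat.eq_dec i j). subst; lia. assert (nb i < nb j) by (apply nb_lt; lia). lia. Qed.
Lemma nb_ge i : i <= nb i.
Proof. induction i. lia. specialize (hninc i). lia. Qed.

Lemma memC_ext i x y : (forall t, nb i <= t -> t < nb (S i) -> x t = y t) ->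
  memC nb C i x -> memC nb C i y.
Proof.
  intros h hx. unfold memC in *.
  replace (restr_int nb i y) with (restr_int nb i x); auto.
  apply functional_extensionality. intro t. unfold restr_int.
  destruct (Nat.leb_spec (nb i) t); destruct (Nat.ltb_spec t (nb (S i))); simpl; auto.
Qed.

Lemma memC_agree i N x y : nb (S i) <= N -> agree N x y -> memC nb C i x -> memC nb C i y.
Proof. intros h ha. apply memC_ext. intros t h1 h2. apply ha. lia. Qed.

Lemma inT_agree m N s s' : inTstar P m N s -> agree N s s' -> inTstar P m N s'.
Proof. intros [z [hz ha]] h. exists z. split; auto. eapply agree_trans; eauto. Qed.
Lemma inT_mono m N M s : N <= M -> inTstar P m M s -> inTstar P m N s.
Proof. intros h [z [hz ha]]. exists z. split; auto. eapply agree_mono; eauto. Qed.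
Lemma inT_zero m N x : inTstar P m N (cadd x x).
Proof.
  destruct (hP m) as [[p hp] _]. exists (cadd p p). split.
  exists p, p. auto. intros k _. unfold cadd. rewrite !xorb_nilpotent. auto.
Qed.
Lemma inT_comm m N x y : inTstar P m N (cadd x y) -> inTstar P m N (cadd y x).
Proof. intros h. eapply inT_agree; eauto. intros k _. unfold cadd. apply xorb_comm. Qed.




Lemma tree_uniq nn pi k k' l : tree_mapping nn pi -> pi k l <> None -> pi k' l <> None -> k = k'.
Proof.
  intros [h1 h2] e1 e2. destruct (h1 _ _ e1) as [a b].
  destruct (h2 l ltac:(lia) b) as [k0 [_ [_ hu]]].
  destruct (h1 _ _ e2). rewrite (hu k), (hu k'); auto.
Qed.

Lemma offsets nn pi (zc : nat -> cantor) : tree_mapping nn pi ->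
  exists d : nat -> cantor, forall k l m', pi k l = Some m' -> forall t, d l t = xorb (d k t) (zc l t).
Proof.
  intros ht.
  assert (gen : forall N, exists d : nat -> cantor, forall k l m', l < N -> pi k l = Some m' ->
     forall t, d l t = xorb (d k t) (zc l t)).
  { induction N.
    - exists (fun _ _ => false). intros; lia.
    - destruct IHN as [d hd]. destruct (classic (exists k m', pi k N = Some m')) as [[k [m' e]]|hno].
      + assert (hk : k < N) by (destruct ht as [h1 _]; destruct (h1 k N) as [a b]; [congruence|lia]).
        exists (fun l => if l =? N then (fun t => xorb (d k t) (zc N t)) else d l).
        intros k' l m'' hl e2 t. pose proof ht as [h1 _].
        destruct (h1 k' l) as [a b]; [congruence|].
        destruct (Nat.eqb_spec l N).
        * subst. assert (k' = k) by (apply (tree_uniq nn pi k' k N ht); congruence). subst.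
          destruct (Nat.eqb_spec k N); [lia|]. auto.
        * destruct (Nat.eqb_spec k' N); [lia|]. eapply hd; eauto. lia.
      + exists d. intros k l m' hl e t. destruct (Nat.eq_dec l N).
        * subst. exfalso. apply hno. eauto.
        * eapply hd; eauto. lia. }
  pose proof ht as [h1 h2].
  destruct (gen nn) as [d hd]. exists d. intros k l m' e. eapply hd; eauto.
  destruct (h1 k l); [congruence|lia].
Qed.

Fixpoint ivf (k t : nat) : nat := match k with 0 => 0 | S k' => if nb k <=? t then k else ivf k' t end.

Lemma ivf_spec i t k : nb i <= t -> t < nb (S i) -> i <= k -> ivf k t = i.
Proof.
  intros h1 h2. induction k; intros h3.
  - simpl. lia.
  - simpl. destruct (Nat.eq_dec i (S k)).
    + subst. destruct (Nat.leb_spec (nb (S k)) t); lia.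
    + destruct (Nat.leb_spec (nb (S k)) t).
      * assert (nb (S i) <= nb (S k)) by (apply nb_mono; auto; lia). lia.
      * apply IHk. lia.
Qed.

Definition Wit nn pi s i xs := (forall j, j < nn -> H nb C (xs j)) /\
  (forall j, j < nn -> agree (nb i) (xs j) (s j)) /\ (forall j, i < j -> inS nb C P nn pi xs j).

Lemma realize nn pi s i (zc : nat -> cantor) : inS nb C P nn pi s i ->
  (forall k l m', pi k l = Some m' -> Pstar P m' (zc l) /\ agree (nb i) (zc l) (cadd (s k) (s l))) ->
  exists xs, (forall j, j < nn -> H nb C (xs j)) /\ (forall j, j < nn -> agree (nb i) (xs j) (s j)) /\
    (forall k l m', pi k l = Some m' -> forall t, cadd (xs k) (xs l) t = zc l t).
Proof.
  intros [h1 [htree [hle [hacc hed]]]] hz.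
  destruct (offsets nn pi zc htree) as [d hd].
  destruct (fchoice (fun i' t => forall k, k <= nb i' -> memC nb C i' (cadd t (d k))) (fun i' => hCin i' d)) as [tt htt].
  set (xs := fun l t => if t <? nb i then s l t else xorb (tt (ivf t t) t) (d l t)).
  exists xs. split; [|split].
  - intros j hj i'. destruct (Nat.ltb_spec i' i).
    + apply (memC_ext i' (s j)). 
      * intros t a b. unfold xs. assert (nb (S i') <= nb i) by (apply nb_mono; lia).
        destruct (Nat.ltb_spec t (nb i)); [auto|lia].
      * apply hacc; auto.
    + apply (memC_ext i' (cadd (tt i') (d j))).
      * intros t a b. unfold xs. assert (nb i <= nb i') by (apply nb_mono; lia).
        destruct (Nat.ltb_spec t (nb i)); [lia|].
        assert (i' <= nb i') by (apply nb_ge).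
        rewrite (ivf_spec i' t t); auto; lia.
      * apply htt. assert (nb i <= nb i') by (apply nb_mono; lia). lia.
  - intros j hj t ht. unfold xs. destruct (Nat.ltb_spec t (nb i)); [auto|lia].
  - intros k l m' e t. destruct (hz _ _ _ e) as [_ ha]. unfold xs, cadd in *.
    destruct (Nat.ltb_spec t (nb i)).
    + symmetry. apply ha. auto.
    + rewrite (hd _ _ _ e t). destruct (tt (ivf t t) t), (d k t), (zc l t); reflexivity.
Qed.

Lemma zc_choice nn pi s i : inS nb C P nn pi s i ->
  exists zc : nat -> cantor, forall k l m', pi k l = Some m' -> Pstar P m' (zc l) /\ agree (nb i) (zc l) (cadd (s k) (s l)).
Proof.
  intros [h1 [htree [hle [hacc hed]]]].
  cut (exists f : nat -> cantor, forall l k m', pi k l = Some m' -> Pstar P m' (f l) /\ agree (nb i) (f l) (cadd (s k) (s l))).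
  { intros [f hf]. exists f. intros k l m' e. apply hf; auto. }
  apply (fchoice (fun l z => forall k m', pi k l = Some m' -> Pstar P m' z /\ agree (nb i) z (cadd (s k) (s l)))).
  intro l. destruct (classic (exists k m', pi k l = Some m')) as [[k [m' e]]|hno].
  - destruct (hed _ _ _ e) as [z [hz ha]]. exists z. intros k' m'' e2.
    assert (k' = k) by (apply (tree_uniq nn pi k' k l htree); congruence). subst. rewrite e in e2. inversion e2; subst. auto.
  - exists (fun _ => false). intros k m' e. exfalso. eauto.
Qed.

Lemma exact_inS nn pi s i xs (zc : nat -> cantor) : inS nb C P nn pi s i ->
  (forall j, j < nn -> H nb C (xs j)) ->
  (forall k l m', pi k l = Some m' -> Pstar P m' (zc l) /\ forall t, cadd (xs k) (xs l) t = zc l t) ->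
  forall j, i < j -> inS nb C P nn pi xs j.
Proof.
  intros [h1 [htree [hle [hacc hed]]]] hH hz j hj. split; [auto|split; [auto|split; [|split]]].
  - assert (nb i <= nb j) by (apply nb_mono; lia). lia.
  - intros l hl j' _. apply hH; auto.
  - intros k l m' e. destruct (hz _ _ _ e) as [hp he]. exists (zc l). split; auto.
    intros t _. symmetry; auto.
Qed.

Lemma realize_wit nn pi s i : inS nb C P nn pi s i -> exists xs, Wit nn pi s i xs.
Proof.
  intros hs. destruct (zc_choice _ _ _ _ hs) as [zc hz].
  destruct (realize _ _ _ _ zc hs hz) as [xs [h1 [h2 h3]]].
  exists xs. split; [auto|split; auto]. eapply exact_inS; eauto.
  intros k l m' e. split. apply (hz _ _ _ e). eapply h3; eauto.
Qed.

Definition edge_map (n2 : nat) (p1 p2 : nat -> nat -> option nat) (phi : nat -> nat) :=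
  forall k l m', p2 k l = Some m' ->
    phi k = phi l \/ p1 (phi k) (phi l) = Some m' \/ p1 (phi l) (phi k) = Some m'.

Lemma acc_agree i x y : agree (nb i) x y -> acceptable nb C i x -> acceptable nb C i y.
Proof. intros ha hx j hj. apply (memC_agree j (nb i) x y); auto. apply nb_mono; lia. Qed.

Lemma H_acc i x : H nb C x -> acceptable nb C i x.
Proof. intros h j _. apply h. Qed.

Lemma inS_transport n1 p1 s1 i n2 p2 phi s2 : inS nb C P n1 p1 s1 i -> tree_mapping n2 p2 -> 1 <= n2 -> n2 <= nb i ->
  (forall j, j < n2 -> phi j < n1) -> edge_map n2 p1 p2 phi ->
  (forall j, j < n2 -> agree (nb i) (s2 j) (s1 (phi j))) -> inS nb C P n2 p2 s2 i.
Proof.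
  intros [h1 [ht1 [hle [hacc hed]]]] ht2 h12 hle2 hphi hem hag.
  split; [auto|split; [auto|split; [auto|split]]].
  - intros j hj. apply (acc_agree i (s1 (phi j))). apply agree_sym; auto. apply hacc; auto.
  - intros k l m' e. destruct ht2 as [hkl _]. destruct (hkl k l) as [hk hl]; [congruence|].
    assert (ag : agree (nb i) (cadd (s2 k) (s2 l)) (cadd (s1 (phi k)) (s1 (phi l)))).
    { intros t ht. unfold cadd. rewrite (hag k), (hag l); auto; lia. }
    destruct (hem _ _ _ e) as [eq|[e1|e1]].
    + eapply inT_agree. apply (inT_zero m' (nb i) (s1 (phi k))).
      intros t ht. rewrite ag by auto. unfold cadd. rewrite eq. reflexivity.
    + eapply inT_agree. apply (hed _ _ _ e1). apply agree_sym; auto.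
    + eapply inT_agree. apply inT_comm. apply (hed _ _ _ e1). apply agree_sym; auto.
Qed.

Lemma inS_down nn p s i i' : inS nb C P nn p s i -> i' <= i -> nn <= nb i' -> inS nb C P nn p s i'.
Proof.
  intros [h1 [ht [hle [hacc hed]]]] hi hn. split; [auto|split; [auto|split; [auto|split]]].
  - intros j hj k hk. apply hacc; auto. lia.
  - intros k l m' e. eapply inT_mono; [|apply hed; eauto]. apply nb_mono; auto.
Qed.

Lemma Wit_transport n1 p1 s1 i1 n2 p2 s2 i2 phi w : inS nb C P n1 p1 s1 i1 -> inS nb C P n2 p2 s2 i2 -> i2 <= i1 ->
  (forall j, j < n2 -> phi j < n1) -> edge_map n2 p1 p2 phi ->
  (forall j, j < n2 -> agree (nb i2) (s2 j) (s1 (phi j))) ->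
  Wit n1 p1 s1 i1 w -> Wit n2 p2 s2 i2 (fun j => w (phi j)).
Proof.
  intros hs1 hs2 hi hphi hem hag [wH [wag wS]].
  pose proof hs2 as [h1 [ht2 [hle2 _]]].
  split; [|split].
  - intros j hj. apply wH; auto.
  - intros j hj. apply (agree_trans _ _ (s1 (phi j))).
    + apply (agree_mono (nb i2) (nb i1)). apply nb_mono; auto. apply wag. auto.
    + apply agree_sym. apply hag. auto.
  - intros j hj. assert (hn : n2 <= nb j) by (assert (nb i2 <= nb j) by (apply nb_mono; lia); lia).
    destruct (Nat.ltb_spec i1 j).
    + eapply inS_transport; eauto. intros t _ k _. reflexivity.
    + apply (inS_down _ _ _ i1); auto.
      apply (inS_transport n1 p1 s1 i1 n2 p2 phi); auto.
      all: try (assert (nb j <= nb i1) by (apply nb_mono; lia); lia).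
      all: try (intros t ht; apply wag; auto).
Qed.

Variable m : nat.

Record cond := mkc { na : nat; pA : nat -> nat -> option nat; sA : nat -> cantor;
                     nbB : nat; pB : nat -> nat -> option nat; sB : nat -> cantor; lv : nat }.

Definition jn c := na c + nbB c.
Definition jpi c k l :=
  if l <? na c then pA c k l
  else if (k =? 0) && (l =? na c) then Some m
  else if na c <=? k then pB c (k - na c) (l - na c) else None.
Definition jdata c j := if j <? na c then sA c j else sB c (j - na c).

Definition Valid c := inS nb C P (jn c) (jpi c) (jdata c) (lv c) /\
  tree_mapping (na c) (pA c) /\ tree_mapping (nbB c) (pB c) /\ 1 <= na c /\ 1 <= nbB c.
Definition CW c w := Wit (jn c) (jpi c) (jdata c) (lv c) w.

Lemma jpi_A c k l : l < na c -> jpi c k l = pA c k l.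
Proof. intros h. unfold jpi. destruct (Nat.ltb_spec l (na c)); [auto|lia]. Qed.
Lemma jpi_X c : jpi c 0 (na c) = Some m.
Proof. unfold jpi. destruct (Nat.ltb_spec (na c) (na c)); [lia|]. rewrite !Nat.eqb_refl. reflexivity. Qed.
Lemma jpi_B c k l : 1 <= na c -> jpi c (na c + k) (na c + l) = pB c k l.
Proof.
  intros h. unfold jpi. destruct (Nat.ltb_spec (na c + l) (na c)); [lia|].
  destruct (Nat.eqb_spec (na c + k) 0); [lia|]. simpl.
  destruct (Nat.leb_spec (na c) (na c + k)); [|lia]. f_equal; lia.
Qed.
Lemma jpi_cases c k l m' : tree_mapping (na c) (pA c) -> tree_mapping (nbB c) (pB c) -> jpi c k l = Some m' ->
  (l < na c /\ pA c k l = Some m') \/ (k = 0 /\ l = na c /\ m' = m) \/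
  (exists k0 l0, k = na c + k0 /\ l = na c + l0 /\ pB c k0 l0 = Some m').
Proof.
  intros tA tB. unfold jpi. destruct (Nat.ltb_spec l (na c)). auto.
  destruct (Nat.eqb_spec k 0); destruct (Nat.eqb_spec l (na c)); simpl.
  - intro E; inversion E; subst; auto.
  - destruct (Nat.leb_spec (na c) k).
    + intros E. right; right. exists (k - na c), (l - na c). repeat split; try lia. auto.
    + discriminate.
  - destruct (Nat.leb_spec (na c) k).
    + intros E. right; right. exists (k - na c), (l - na c). repeat split; try lia. auto.
    + discriminate.
  - destruct (Nat.leb_spec (na c) k).
    + intros E. right; right. exists (k - na c), (l - na c). repeat split; try lia. auto.
    + discriminate.
Qed.
Lemma jdata_A c j : j < na c -> jdata c j = sA c j.
Proof. intros h. unfold jdata. destruct (Nat.ltb_spec j (na c)); [auto|lia]. Qed.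
Lemma jdata_B c j : jdata c (na c + j) = sB c j.
Proof. unfold jdata. destruct (Nat.ltb_spec (na c + j) (na c)); [lia|]. f_equal; lia. Qed.

Lemma join_tree c : tree_mapping (na c) (pA c) -> tree_mapping (nbB c) (pB c) -> 1 <= na c -> 1 <= nbB c ->
  tree_mapping (jn c) (jpi c).
Proof.
  intros tA tB ha hb. pose proof tA as [a1 a2]. pose proof tB as [b1 b2]. unfold jn. split.
  - intros k l e. destruct (jpi c k l) as [m'|] eqn:E; [|congruence].
    destruct (jpi_cases c k l m' tA tB E) as [[h1 h2]|[[h1 [h2 h3]]|[k0 [l0 [h1 [h2 h3]]]]]].
    + destruct (a1 k l); [congruence|]. lia.
    + lia.
    + destruct (b1 k0 l0); [congruence|]. lia.
  - intros l hl hl2. destruct (Nat.ltb_spec l (na c)).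
    + destruct (a2 l hl) as [k [hk [hk2 hu]]]; auto. exists k. split; auto. rewrite jpi_A by auto. split; auto.
      intros k' hk' e. rewrite jpi_A in e by auto. auto.
    + destruct (Nat.eq_dec l (na c)).
      * subst. exists 0. split; [lia|]. rewrite jpi_X. split; [congruence|].
        intros k' hk' e. destruct (jpi c k' (na c)) as [m'|] eqn:E; [|congruence].
        destruct (jpi_cases c k' (na c) m' tA tB E) as [[h1 h2]|[[h1 [h2 h3]]|[k0 [l0 [h1 [h2 h3]]]]]]; lia.
      * destruct (b2 (l - na c)) as [k0 [hk0 [hk02 hu]]]; try lia.
        exists (na c + k0). split; [lia|]. split.
        { replace l with (na c + (l - na c)) by lia. rewrite jpi_B by auto. auto. }
        intros k' hk' e. destruct (jpi c k' l) as [m'|] eqn:E; [|congruence].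
        destruct (jpi_cases c k' l m' tA tB E) as [[h1 h2]|[[h1 [h2 h3]]|[k1 [l1 [h1 [h2 h3]]]]]]; try lia.
        subst. rewrite (hu k1); try lia; try congruence. replace (na c + l1 - na c) with l1 by lia. congruence.
Qed.

Lemma join_inS c : tree_mapping (na c) (pA c) -> tree_mapping (nbB c) (pB c) -> 1 <= na c -> 1 <= nbB c ->
  jn c <= nb (lv c) -> (forall j, j < jn c -> acceptable nb C (lv c) (jdata c j)) ->
  (forall k l m', pA c k l = Some m' -> inTstar P m' (nb (lv c)) (cadd (sA c k) (sA c l))) ->
  (forall k l m', pB c k l = Some m' -> inTstar P m' (nb (lv c)) (cadd (sB c k) (sB c l))) ->
  inTstar P m (nb (lv c)) (cadd (sA c 0) (sB c 0)) -> Valid c.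
Proof.
  intros tA tB ha hb hle hacc eA eB eX. split; [|auto]. split; [unfold jn; lia|split; [apply join_tree; auto|split; [auto|split; [auto|]]]].
  intros k l m' E. pose proof tA as [a1 _]. pose proof tB as [b1 _].
  destruct (jpi_cases c k l m' tA tB E) as [[h1 h2]|[[h1 [h2 h3]]|[k0 [l0 [h1 [h2 h3]]]]]].
  - destruct (a1 k l); [congruence|]. rewrite !jdata_A by lia. auto.
  - subst. rewrite jdata_A by lia. replace (na c) with (na c + 0) by lia. rewrite jdata_B. auto.
  - subst. rewrite !jdata_B. auto.
Qed.

Lemma Valid_edgesA c w k l m' : Valid c -> CW c w -> pA c k l = Some m' -> forall j, lv c < j ->
  inTstar P m' (nb j) (cadd (w k) (w l)).
Proof.
  intros [_ [tA _]] [_ [_ hS]] e j hj. destruct (hS j hj) as [_ [_ [_ [_ hed]]]].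
  apply (hed k l). destruct tA as [a1 _]. destruct (a1 k l); [congruence|]. rewrite jpi_A; auto.
Qed.
Lemma Valid_edgesB c w k l m' : Valid c -> CW c w -> pB c k l = Some m' -> forall j, lv c < j ->
  inTstar P m' (nb j) (cadd (w (na c + k)) (w (na c + l))).
Proof.
  intros [_ [_ [_ [ha _]]]] [_ [_ hS]] e j hj. destruct (hS j hj) as [_ [_ [_ [_ hed]]]].
  apply (hed (na c + k) (na c + l)). rewrite jpi_B; auto.
Qed.
Lemma Valid_edgesX c w : CW c w -> forall j, lv c < j -> inTstar P m (nb j) (cadd (w 0) (w (na c))).
Proof.
  intros [_ [_ hS]] j hj. destruct (hS j hj) as [_ [_ [_ [_ hed]]]]. apply (hed 0 (na c)). apply jpi_X.
Qed.

Definition Ext c c' := lv c <= lv c' /\ na c <= na c' /\ nbB c <= nbB c' /\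
  (forall k l, l < na c -> pA c' k l = pA c k l) /\ (forall k l, l < nbB c -> pB c' k l = pB c k l) /\
  (forall j, j < na c -> agree (nb (lv c)) (sA c' j) (sA c j)) /\
  (forall j, j < nbB c -> agree (nb (lv c)) (sB c' j) (sB c j)).

Lemma Ext_refl c : Ext c c.
Proof. repeat split; auto; intros; intros t _; reflexivity. Qed.

Lemma Ext_trans c1 c2 c3 : Ext c1 c2 -> Ext c2 c3 -> Ext c1 c3.
Proof.
  intros [a1 [a2 [a3 [a4 [a5 [a6 a7]]]]]] [b1 [b2 [b3 [b4 [b5 [b6 b7]]]]]].
  split; [lia|split; [lia|split; [lia|split; [|split; [|split]]]]].
  - intros k l h. rewrite b4 by lia. auto.
  - intros k l h. rewrite b5 by lia. auto.
  - intros j h. eapply agree_trans; [|apply a6; auto]. eapply agree_mono; [|apply b6; lia]. apply nb_mono; auto.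
  - intros j h. eapply agree_trans; [|apply a7; auto]. eapply agree_mono; [|apply b7; lia]. apply nb_mono; auto.
Qed.

Definition phx c c' j := if j <? na c then j else j - na c + na c'.

Lemma phx_bound c c' j : Ext c c' -> j < jn c -> phx c c' j < jn c'.
Proof. intros [_ [h2 [h3 _]]] h. unfold phx, jn in *. destruct (Nat.ltb_spec j (na c)); lia. Qed.

Lemma Ext_edge c c' : Valid c -> Valid c' -> Ext c c' -> edge_map (jn c) (jpi c') (jpi c) (phx c c').
Proof.
  intros [_ [tA [tB [ha hb]]]] [_ [tA' [tB' [ha' hb']]]] [e1 [e2 [e3 [e4 [e5 _]]]]] k l m' E.
  right; left. pose proof tA as [a1 _]. pose proof tB as [b1 _].
  destruct (jpi_cases c k l m' tA tB E) as [[h1 h2]|[[h1 [h2 h3]]|[k0 [l0 [h1 [h2 h3]]]]]].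
  - destruct (a1 k l); [congruence|]. unfold phx.
    destruct (Nat.ltb_spec k (na c)); [|lia]. destruct (Nat.ltb_spec l (na c)); [|lia].
    rewrite jpi_A by lia. rewrite e4; auto.
  - subst. unfold phx. destruct (Nat.ltb_spec 0 (na c)); [|lia]. destruct (Nat.ltb_spec (na c) (na c)); [lia|].
    replace (na c - na c + na c') with (na c') by lia. apply jpi_X.
  - subst. destruct (b1 k0 l0); [congruence|]. unfold phx.
    destruct (Nat.ltb_spec (na c + k0) (na c)); [lia|]. destruct (Nat.ltb_spec (na c + l0) (na c)); [lia|].
    replace (na c + k0 - na c + na c') with (na c' + k0) by lia.
    replace (na c + l0 - na c + na c') with (na c' + l0) by lia. rewrite jpi_B by auto. rewrite e5; auto.
Qed.

Lemma Ext_data c c' j : Ext c c' -> j < jn c -> agree (nb (lv c)) (jdata c' (phx c c' j)) (jdata c j).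
Proof.
  intros [e1 [e2 [e3 [e4 [e5 [e6 e7]]]]]] h. unfold phx, jn in *. destruct (Nat.ltb_spec j (na c)).
  - rewrite !jdata_A by lia. auto.
  - replace (j - na c + na c') with (na c' + (j - na c)) by lia. rewrite jdata_B.
    replace j with (na c + (j - na c)) at 2 by lia. rewrite jdata_B. apply e7. lia.
Qed.

Lemma Ext_CW c c' w : Valid c -> Valid c' -> Ext c c' -> CW c' w -> CW c (fun j => w (phx c c' j)).
Proof.
  intros hv hv' he hw. pose proof hv as [hs hr]. pose proof hv' as [hs' hr'].
  apply (Wit_transport (jn c') (jpi c') (jdata c') (lv c')); auto.
  - apply he.
  - intros j hj. apply phx_bound; auto.
  - apply Ext_edge; auto.
  - intros j hj. apply agree_sym. apply Ext_data; auto.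
Qed.

Lemma Ext_inS c c' : Valid c -> Valid c' -> Ext c c' ->
  inS nb C P (jn c) (jpi c) (fun j => jdata c' (phx c c' j)) (lv c').
Proof.
  intros hv hv' he. pose proof hv as [hs [tA [tB [ha hb]]]]. pose proof hv' as [hs' _].
  apply (inS_transport (jn c') (jpi c') (jdata c') (lv c') (jn c) (jpi c) (phx c c')); auto.
  - apply join_tree; auto.
  - unfold jn; lia.
  - destruct hs as [_ [_ [hle _]]]. destruct he as [e1 _]. assert (nb (lv c) <= nb (lv c')) by (apply nb_mono; auto). lia.
  - intros j hj. apply phx_bound; auto.
  - apply Ext_edge; auto.
  - intros j hj t ht. reflexivity.
Qed.

Definition swap c := mkc (nbB c) (pB c) (sB c) (na c) (pA c) (sA c) (lv c).
Definition phs c j := if j <? nbB c then na c + j else j - nbB c.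

Lemma swap_swap c : swap (swap c) = c.
Proof. destruct c; reflexivity. Qed.

Lemma swap_edge c : Valid c -> edge_map (jn (swap c)) (jpi c) (jpi (swap c)) (phs c).
Proof.
  intros [_ [tA [tB [ha hb]]]] k l m' E. pose proof tA as [a1 _]. pose proof tB as [b1 _].
  destruct (jpi_cases (swap c) k l m' tB tA E) as [[h1 h2]|[[h1 [h2 h3]]|[k0 [l0 [h1 [h2 h3]]]]]]; simpl in *.
  - right; left. destruct (b1 k l); [congruence|]. unfold phs.
    destruct (Nat.ltb_spec k (nbB c)); [|lia]. destruct (Nat.ltb_spec l (nbB c)); [|lia].
    rewrite jpi_B by auto. auto.
  - right; right. subst. unfold phs. destruct (Nat.ltb_spec 0 (nbB c)); [|lia].
    destruct (Nat.ltb_spec (nbB c) (nbB c)); [lia|]. replace (nbB c - nbB c) with 0 by lia.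
    replace (na c + 0) with (na c) by lia. apply jpi_X.
  - right; left. subst. destruct (a1 k0 l0); [congruence|]. unfold phs.
    destruct (Nat.ltb_spec (nbB c + k0) (nbB c)); [lia|]. destruct (Nat.ltb_spec (nbB c + l0) (nbB c)); [lia|].
    replace (nbB c + k0 - nbB c) with k0 by lia. replace (nbB c + l0 - nbB c) with l0 by lia.
    rewrite jpi_A by auto. auto.
Qed.



Lemma swap_data c j : j < jn c -> jdata (swap c) j = jdata c (phs c j).
Proof.
  intros hj. unfold jdata, phs, jn in *; simpl. destruct (Nat.ltb_spec j (nbB c)).
  - destruct (Nat.ltb_spec (na c + j) (na c)); [lia|]. f_equal; lia.
  - destruct (Nat.ltb_spec (j - nbB c) (na c)); auto. lia.
Qed.

Lemma phs_bound c j : j < jn (swap c) -> phs c j < jn c.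
Proof. unfold phs, jn; simpl. destruct (Nat.ltb_spec j (nbB c)); lia. Qed.

Lemma Valid_swap c : Valid c -> Valid (swap c).
Proof.
  intros hv. pose proof hv as [hs [tA [tB [ha hb]]]]. split; [|simpl; auto].
  apply (inS_transport (jn c) (jpi c) (jdata c) (lv c) _ _ (phs c)); simpl; auto.
  - apply (join_tree (swap c)); auto.
  - unfold jn; simpl; lia.
  - destruct hs as [_ [_ [hle _]]]. unfold jn in *; simpl; lia.
  - apply phs_bound.
  - apply swap_edge; auto.
  - intros j hj t ht. rewrite swap_data; auto. unfold jn in *; simpl in *; lia.
Qed.

Lemma CW_swap c w : Valid c -> CW c w -> CW (swap c) (fun j => w (phs c j)).
Proof.
  intros hv hw. pose proof (Valid_swap c hv) as [hs' _]. pose proof hv as [hs _].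
  apply (Wit_transport (jn c) (jpi c) (jdata c) (lv c)); auto.
  - apply phs_bound.
  - apply swap_edge; auto.
  - intros j hj t ht. rewrite swap_data; auto. unfold jn in *; simpl in *; lia.
Qed.

Lemma Ext_swap c d : Ext (swap c) d -> Ext c (swap d).
Proof. destruct c, d. unfold Ext; simpl. tauto. Qed.

Definition grA (a : nat) (p : nat -> nat -> option nat) k l :=
  if l =? a then (if k =? 0 then Some m else None) else p k l.

Lemma grow_tree a p : tree_mapping a p -> 1 <= a -> tree_mapping (a + 1) (grA a p).
Proof.
  intros [t1 t2] ha. unfold grA. split.
  - intros k l. destruct (Nat.eqb_spec l a); destruct (Nat.eqb_spec k 0); try congruence; try lia;
      intros E; destruct (t1 k l E); lia.
  - intros l hl hl2. destruct (Nat.eqb_spec l a).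
    + exists 0. split; [lia|]. simpl. split; [congruence|]. intros k' _ E.
      destruct (Nat.eqb_spec k' 0); congruence.
    + destruct (t2 l hl) as [k [hk [hk2 hu]]]; [lia|]. exists k. auto.
Qed.

Lemma wit_H c w j : CW c w -> j < jn c -> H nb C (w j).
Proof. intros [h _] hj. auto. Qed.
Lemma wit_ag c w j : CW c w -> j < jn c -> agree (nb (lv c)) (w j) (jdata c j).
Proof. intros [_ [h _]] hj. auto. Qed.

Lemma grow c : Valid c -> exists c', Valid c' /\ Ext c c' /\ na c' = S (na c) /\ nbB c' = S (nbB c) /\ lv c < lv c'.
Proof.
  intros hv. pose proof hv as [hs [tA [tB [ha hb]]]].
  destruct (realize_wit _ _ _ _ hs) as [w hw].
  set (a := na c) in *. set (b := nbB c) in *.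
  set (lev := S (lv c + a + b + 2)).
  exists (mkc (a + 1) (grA a (pA c)) (fun j => if j <? a then w j else w 0)
              (b + 1) (grA b (pB c)) (fun j => if j <? b then w (a + j) else w a) lev).
  assert (hH : forall j, j < a + b -> H nb C (w j)) by (intros; eapply wit_H; eauto).
  assert (hlev : lv c < lev) by (unfold lev; lia).
  split; [|split; [|split; [simpl; lia|split; simpl; lia]]].
  - apply join_inS; simpl.
    + apply grow_tree; auto.
    + apply grow_tree; auto.
    + lia.
    + lia.
    + unfold jn; simpl. assert (lev <= nb lev) by apply nb_ge. unfold lev in *. lia.
    + intros j hj. apply H_acc. unfold jdata, jn in *; simpl in *.
      destruct (Nat.ltb_spec j (a + 1)); destruct (Nat.ltb_spec j a); try (apply hH; lia).
      all: try lia. all: destruct (Nat.ltb_spec (j - (a + 1)) b); apply hH; lia.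
    + intros k l m' E. unfold grA in E. destruct (Nat.eqb_spec l a).
      * destruct (Nat.eqb_spec k 0); [|congruence]. inversion E; subst.
        destruct (Nat.ltb_spec 0 a); [|lia]. destruct (Nat.ltb_spec a a); [lia|]. apply inT_zero.
      * destruct tA as [a1 _]. destruct (a1 k l) as [h1 h2]; [congruence|].
        destruct (Nat.ltb_spec k a); [|lia]. destruct (Nat.ltb_spec l a); [|lia].
        eapply Valid_edgesA; eauto.
    + intros k l m' E. unfold grA in E. destruct (Nat.eqb_spec l b).
      * destruct (Nat.eqb_spec k 0); [|congruence]. inversion E; subst.
        destruct (Nat.ltb_spec 0 b); [|lia]. destruct (Nat.ltb_spec b b); [lia|].
        replace (a + 0) with a by lia. apply inT_zero.
      * destruct tB as [b1 _]. destruct (b1 k l) as [h1 h2]; [congruence|].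
        destruct (Nat.ltb_spec k b); [|lia]. destruct (Nat.ltb_spec l b); [|lia].
        eapply Valid_edgesB; eauto.
    + destruct (Nat.ltb_spec 0 a); [|lia]. destruct (Nat.ltb_spec 0 b); [|lia].
      replace (a + 0) with a by lia. eapply Valid_edgesX; eauto.
  - unfold Ext; simpl. split; [lia|split; [lia|split; [lia|split; [|split; [|split]]]]].
    + intros k l hl. unfold grA. destruct (Nat.eqb_spec l a); [lia|auto].
    + intros k l hl. unfold grA. destruct (Nat.eqb_spec l b); [lia|auto].
    + intros j hj. destruct (Nat.ltb_spec j a); [|lia]. rewrite <- (jdata_A c j) by auto.
      eapply wit_ag; eauto. unfold jn; lia.
    + intros j hj. destruct (Nat.ltb_spec j b); [|lia]. rewrite <- (jdata_B c j).
      eapply wit_ag; eauto. unfold jn; lia.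
Qed.

Definition grf (a : nat) (p p' : nat -> nat -> option nat) k l :=
  if l <? a then p k l else if k =? 0 then p' 0 (l + 1 - a)
  else if a <=? k then p' (k + 1 - a) (l + 1 - a) else None.

Lemma graft_tree a p n' p' : tree_mapping a p -> tree_mapping n' p' -> 1 <= a -> 1 <= n' ->
  tree_mapping (a + n' - 1) (grf a p p').
Proof.
  intros tA tS ha hn. pose proof tA as [a1 a2]. pose proof tS as [s1 s2]. unfold grf. split.
  - intros k l. destruct (Nat.ltb_spec l a).
    + intros E. destruct (a1 k l E); lia.
    + destruct (Nat.eqb_spec k 0).
      * intros E. destruct (s1 _ _ E); lia.
      * destruct (Nat.leb_spec a k); [|congruence]. intros E. destruct (s1 _ _ E); lia.
  - intros l hl hl2. destruct (Nat.ltb_spec l a).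
    + destruct (a2 l hl) as [k [hk [hk2 hu]]]; auto; exists k; auto.
    + destruct (s2 (l + 1 - a)) as [k0 [hk0 [hk02 hu]]]; try lia.
      exists (if k0 =? 0 then 0 else k0 + a - 1).
      destruct (Nat.eqb_spec k0 0).
      * subst. split; [lia|]. destruct (Nat.ltb_spec l a); [lia|]. simpl. split; auto.
        intros k' hk' E. destruct (Nat.eqb_spec k' 0); auto.
        destruct (Nat.leb_spec a k'); [|congruence].
        assert (k' + 1 - a = 0) by (apply hu; [lia|auto]). lia.
      * split; [lia|]. destruct (Nat.ltb_spec l a); [lia|].
        destruct (Nat.eqb_spec (k0 + a - 1) 0); [lia|]. destruct (Nat.leb_spec a (k0 + a - 1)); [|lia].
        split. { replace (k0 + a - 1 + 1 - a) with k0 by lia. auto. }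
        intros k' hk' E. destruct (Nat.eqb_spec k' 0).
        -- subst. assert (0 = k0) by (apply hu; [lia|auto]). lia.
        -- destruct (Nat.leb_spec a k'); [|congruence].
           assert (k' + 1 - a = k0) by (apply hu; [lia|auto]). lia.
Qed.

Lemma fstepA c F : Valid c -> tau_nowhere_dense nb C P F ->
  exists c', Valid c' /\ Ext c c' /\ forall w, CW c' w -> ~ F (w 0).
Proof.
  intros hv hnd. pose proof hv as [hs [tA [tB [ha hb]]]].
  destruct (realize_wit _ _ _ _ hs) as [w0 hw0].
  set (UU := U nb C P (jn c) (jpi c) (jdata c) (lv c)).
  assert (hU0 : UU (w0 0)).
  { split. eapply wit_H; eauto. unfold jn; lia. exists w0. destruct hw0 as [x1 [x2 x3]]. auto. }
  assert (hUo : tau_open nb C P UU).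
  { split. intros x [hx _]; auto. intros x hx. exists (jn c), (jpi c), (jdata c), (lv c). split; auto. split; auto.
    intros y hy; auto. }
  assert (hy : exists y, UU y /\ ~ tau_closure nb C P F y).
  { apply NNPP. intro hno. apply (hnd (w0 0)). exists UU. split; auto. split; auto.
    intros y hy. apply NNPP. intro h2. apply hno. eauto. }
  destruct hy as [y [hUy hcl]].
  assert (hO : exists O, tau_open nb C P O /\ O y /\ forall z, O z -> ~ F z).
  { apply NNPP. intro hno. apply hcl. split. apply hUy. intros O hO hOy.
    apply NNPP. intro h2. apply hno. exists O. split; auto. split; auto. intros z hz hFz. apply h2. eauto. }
  destruct hO as [O [[_ hOo] [hOy hOF]]].
  destruct (hOo y hOy) as [n' [p' [s' [i' [hsig [hUs hsub]]]]]].
  destruct hUy as [_ [w [hwy [wH [wag wS]]]]].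
  assert (hw : CW c w) by (split; auto).
  destruct hUs as [_ [ys [hys0 [ysH [ysag ysS]]]]].
  pose proof hsig as [hn' [tS [hn'le _]]].
  set (a := na c) in *. set (b := nbB c) in *.
  set (lev := S (lv c + i' + a + n' + b)).
  set (sA' := fun j => if j <? a then w j else ys (j + 1 - a)).
  set (c' := mkc (a + n' - 1) (grf a (pA c) p') sA' b (pB c) (fun j => w (a + j)) lev).
  assert (hlev : lv c < lev) by (unfold lev; lia).
  assert (hlev' : i' < lev) by (unfold lev; lia).
  assert (hwH : forall j, j < a + b -> H nb C (w j)) by (intros; apply wH; unfold jn; lia).
  assert (hv' : Valid c').
  { apply join_inS; unfold c'; simpl.
    - apply graft_tree; auto.
    - auto.
    - lia.
    - lia.
    - unfold jn; simpl. assert (lev <= nb lev) by apply nb_ge. unfold lev in *. lia.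
    - intros j hj. apply H_acc. unfold jdata, jn, sA' in *; simpl in *.
      destruct (Nat.ltb_spec j (a + n' - 1)); destruct (Nat.ltb_spec j a).
      all: try (apply hwH; lia). all: try (apply ysH; lia). all: lia.
    - intros k l m' E. unfold grf, sA' in *. destruct (Nat.ltb_spec l a).
      + destruct tA as [a1 _]. destruct (a1 k l) as [h1 h2]; [congruence|].
        destruct (Nat.ltb_spec k a); [|lia]. eapply Valid_edgesA; eauto.
      + destruct (Nat.eqb_spec k 0).
        * subst k. destruct (Nat.ltb_spec 0 a); [|lia]. rewrite hwy, <- hys0.
          destruct (ysS lev hlev') as [_ [_ [_ [_ hed]]]]. apply (hed 0 (l + 1 - a)). auto.
        * destruct (Nat.leb_spec a k); [|congruence]. destruct (Nat.ltb_spec k a); [lia|].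
          destruct (ysS lev hlev') as [_ [_ [_ [_ hed]]]]. apply (hed (k + 1 - a) (l + 1 - a)). auto.
    - intros k l m' E. eapply Valid_edgesB; eauto.
    - unfold sA'. destruct (Nat.ltb_spec 0 a); [|lia]. replace (a + 0) with a by lia. eapply Valid_edgesX; eauto. }
  assert (hext : Ext c c').
  { unfold Ext, c'; simpl. split; [lia|split; [lia|split; [lia|split; [|split; [|split]]]]].
    - intros k l hl. unfold grf. destruct (Nat.ltb_spec l a); [auto|lia].
    - auto.
    - intros j hj. unfold sA'. destruct (Nat.ltb_spec j a); [|lia]. rewrite <- (jdata_A c j) by auto.
      apply wag. unfold jn; lia.
    - intros j hj. rewrite <- (jdata_B c j). apply wag. unfold jn; lia. }
  exists c'. split; [auto|split; [auto|]].
  intros w' hw' hF. apply (hOF (w' 0)); auto. apply hsub.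
  split. { eapply wit_H; eauto. unfold jn, c'; simpl; lia. }
  set (phg := fun j => if j =? 0 then 0 else j + a - 1).
  exists (fun j => w' (phg j)). split. reflexivity.
  pose proof hv' as [hs' _].
  apply (Wit_transport (jn c') (jpi c') (jdata c') (lv c')); auto.
  - unfold c'; simpl. lia.
  - intros j hj. unfold phg, jn, c'; simpl. destruct (Nat.eqb_spec j 0); lia.
  - intros k l m' E. right; left. destruct tS as [s1 _]. destruct (s1 k l) as [h1 h2]; [congruence|].
    unfold phg. destruct (Nat.eqb_spec l 0); [lia|].
    rewrite jpi_A by (unfold c'; simpl; lia). unfold c'; simpl. unfold grf.
    destruct (Nat.ltb_spec (l + a - 1) a); [lia|].
    destruct (Nat.eqb_spec k 0).
    + subst k. simpl. replace (l + a - 1 + 1 - a) with l by lia. auto.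
    + destruct (Nat.eqb_spec (k + a - 1) 0); [lia|]. destruct (Nat.leb_spec a (k + a - 1)); [|lia].
      replace (l + a - 1 + 1 - a) with l by lia. replace (k + a - 1 + 1 - a) with k by lia. auto.
  - intros j hj. unfold phg. rewrite jdata_A.
    2: { unfold c'; simpl. destruct (Nat.eqb_spec j 0); lia. }
    unfold c'; simpl. unfold sA'. destruct (Nat.eqb_spec j 0).
    + subst j. destruct (Nat.ltb_spec 0 a); [|lia]. rewrite hwy, <- hys0. apply agree_sym. apply ysag. lia.
    + destruct (Nat.ltb_spec (j + a - 1) a); [lia|]. replace (j + a - 1 + 1 - a) with j by lia.
      apply agree_sym. apply ysag. auto.
Qed.

Lemma separate c : Valid c -> exists c', Valid c' /\ Ext c c' /\ forall w, CW c' w -> w 0 <> w (na c').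
Proof.
  intros hv. pose proof hv as [hs [tA [tB [ha hb]]]].
  destruct (zc_choice _ _ _ _ hs) as [zc0 hz].
  set (a := na c) in *.
  destruct (hz 0 a m (jpi_X c)) as [[p [q [hp [hq hpq]]]] hag].
  destruct (hP m) as [_ [_ noiso]].
  destruct (noiso q (nb (lv c)) hq) as [q' [hq' [hne hqq]]].
  assert (hZ : exists Z, Pstar P m Z /\ agree (nb (lv c)) Z (zc0 a) /\ exists t, Z t = true).
  { destruct (classic (exists t, zc0 a t = true)) as [ht|ht].
    - exists (zc0 a). split. exists p, q. auto. split; auto. intros t _; reflexivity.
    - exists (cadd p q'). split. exists p, q'. auto. split.
      + intros t htt. rewrite hpq. unfold cadd. rewrite hqq; auto.
      + apply NNPP. intro h2. apply hne. apply functional_extensionality. intro t.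
        assert (e1 : zc0 a t = false) by (destruct (zc0 a t) eqn:E; auto; exfalso; eauto).
        assert (e2 : cadd p q' t = false) by (destruct (cadd p q' t) eqn:E; auto; exfalso; eauto).
        rewrite hpq in e1. unfold cadd in *. destruct (p t), (q t), (q' t); simpl in *; congruence. }
  destruct hZ as [Z [hZP [hZa [t0 ht0]]]].
  set (zc := fun l => if l =? a then Z else zc0 l).
  assert (hjt : tree_mapping (jn c) (jpi c)) by (apply join_tree; auto).
  assert (hzc : forall k l m', jpi c k l = Some m' -> Pstar P m' (zc l) /\ agree (nb (lv c)) (zc l) (cadd (jdata c k) (jdata c l))).
  { intros k l m' E. unfold zc. destruct (Nat.eqb_spec l a).
    - subst l. assert (k = 0) by (apply (tree_uniq (jn c) (jpi c) k 0 a hjt); [congruence|rewrite jpi_X; congruence]).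
      subst k. rewrite jpi_X in E. inversion E; subst m'. split; auto.
      eapply agree_trans; eauto.
    - exact (hz k l m' E). }
  destruct (realize _ _ _ _ zc hs hzc) as [xs [xH [xag xex]]].
  assert (hxs : forall j, lv c < j -> inS nb C P (jn c) (jpi c) xs j).
  { apply (exact_inS _ _ _ _ _ zc hs xH). intros k l m' E. split. apply (hzc _ _ _ E). exact (xex k l m' E). }
  set (b := nbB c) in *.
  set (lev := S (lv c + t0)).
  set (c' := mkc a (pA c) (fun j => xs j) b (pB c) (fun j => xs (a + j)) lev).
  assert (hd' : forall j, jdata c' j = xs j).
  { intro j. unfold jdata, c'; simpl. destruct (Nat.ltb_spec j a); auto. f_equal; lia. }
  assert (hlev : lv c < lev) by (unfold lev; lia).
  assert (hv' : Valid c').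
  { split; [|unfold c'; simpl; auto].
    assert (hjt' : tree_mapping (jn c') (jpi c')) by exact hjt.
    assert (g1 : 1 <= jn c') by (unfold jn, c'; simpl; lia).
    assert (g2 : jn c' <= nb lev) by (destruct (hxs lev hlev) as [_ [_ [hle _]]]; unfold jn, c' in *; simpl in *; lia).
    assert (g3 : forall j, j < jn c' -> j < jn c) by (intros j hj; unfold jn, c' in *; simpl in *; lia).
    assert (g4 : edge_map (jn c') (jpi c) (jpi c') (fun j => j)) by (intros k l m' E; right; left; auto).
    assert (g5 : forall j, j < jn c' -> agree (nb lev) (jdata c' j) (xs j)) by (intros j _ t _; rewrite hd'; reflexivity).
    exact (inS_transport (jn c) (jpi c) xs lev (jn c') (jpi c') (fun j => j) (jdata c') (hxs lev hlev) hjt' g1 g2 g3 g4 g5). }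
  exists c'. split; auto. split.
  - unfold Ext, c'; simpl. split; [lia|split; [lia|split; [lia|split; [auto|split; [auto|split]]]]].
    + intros j hj. rewrite <- (jdata_A c j) by auto. apply xag. unfold jn; lia.
    + intros j hj. rewrite <- (jdata_B c j). apply xag. unfold jn; lia.
  - intros w hw e.
    assert (h1 : w 0 t0 = xs 0 t0).
    { rewrite <- hd'. apply (wit_ag c' w 0 hw). unfold jn, c'; simpl; lia.
      unfold c'; simpl. assert (lev <= nb lev) by apply nb_ge. unfold lev in *. lia. }
    assert (h2 : w a t0 = xs a t0).
    { rewrite <- hd'. apply (wit_ag c' w a hw). unfold jn, c'; simpl; lia.
      unfold c'; simpl. assert (lev <= nb lev) by apply nb_ge. unfold lev in *. lia. }
    assert (h3 := xex 0 a m (jpi_X c) t0). unfold zc in h3. rewrite Nat.eqb_refl in h3.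
    unfold c' in e; simpl in e. rewrite <- e in h2. unfold cadd in h3. rewrite <- h1, <- h2, xorb_nilpotent in h3.
    congruence.
Qed.

Lemma init n0 p0 s0 i0 x : inS nb C P n0 p0 s0 i0 -> U nb C P n0 p0 s0 i0 x ->
  exists c, Valid c /\ forall w, CW c w -> U nb C P n0 p0 s0 i0 (w 0) /\ U nb C P n0 p0 s0 i0 (w (na c)).
Proof.
  intros hs [hx [xs [hx0 [xH [xag xS]]]]]. pose proof hs as [h1 [ht [hle _]]].
  set (lev := S (i0 + n0 + n0)).
  set (c := mkc n0 p0 xs n0 p0 xs lev).
  assert (hlev : i0 < lev) by (unfold lev; lia).
  assert (hv : Valid c).
  { apply join_inS; unfold c; simpl; auto.
    - unfold jn; simpl. assert (lev <= nb lev) by apply nb_ge. unfold lev in *. lia.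
    - intros j hj. apply H_acc. unfold jdata, jn in *; simpl in *.
      destruct (Nat.ltb_spec j n0); apply xH; lia.
    - intros k l m' E. destruct (xS lev hlev) as [_ [_ [_ [_ hed]]]]. eauto.
    - intros k l m' E. destruct (xS lev hlev) as [_ [_ [_ [_ hed]]]]. eauto.
    - apply inT_zero. }
  exists c. split; auto. intros w hw. pose proof hv as [hs' [tA [tB _]]].
  split.
  - split. eapply wit_H; eauto. unfold jn, c; simpl; lia.
    exists (fun j => w j). split; auto.
    apply (Wit_transport (jn c) (jpi c) (jdata c) (lv c) n0 p0 s0 i0 (fun j => j)); auto.
    + unfold c; simpl; lia.
    + intros j hj. unfold jn, c; simpl; lia.
    + intros k l m' E. right; left. destruct ht as [t1 _]. destruct (t1 k l); [congruence|].
      rewrite jpi_A by (unfold c; simpl; lia). unfold c; simpl; auto.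
    + intros j hj. rewrite jdata_A by (unfold c; simpl; lia). unfold c; simpl. apply agree_sym. auto.
  - split. eapply wit_H; eauto. unfold jn, c; simpl; lia.
    exists (fun j => w (na c + j)). split. f_equal; lia.
    apply (Wit_transport (jn c) (jpi c) (jdata c) (lv c) n0 p0 s0 i0 (fun j => na c + j)); auto.
    + unfold c; simpl; lia.
    + intros j hj. unfold jn, c; simpl; lia.
    + intros k l m' E. right; left. rewrite jpi_B by (unfold c; simpl; lia). unfold c; simpl; auto.
    + intros j hj. rewrite jdata_B. unfold c; simpl. apply agree_sym. auto.
Qed.

Lemma phx0 c c' : 1 <= na c -> phx c c' 0 = 0.
Proof. intros h. unfold phx. destruct (Nat.ltb_spec 0 (na c)); lia. Qed.
Lemma phxa c c' : phx c c' (na c) = na c'.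
Proof. unfold phx. destruct (Nat.ltb_spec (na c) (na c)); lia. Qed.

Lemma step c F : Valid c -> tau_nowhere_dense nb C P F ->
  exists c', Valid c' /\ Ext c c' /\ na c < na c' /\ nbB c < nbB c' /\ lv c < lv c' /\
    forall w, CW c' w -> ~ F (w 0) /\ ~ F (w (na c')).
Proof.
  intros hv hF.
  destruct (fstepA c F hv hF) as [c1 [hv1 [he1 hav1]]].
  destruct (fstepA (swap c1) F (Valid_swap c1 hv1) hF) as [d [hvd [hed havd]]].
  set (c2 := swap d).
  assert (hv2 : Valid c2) by (apply Valid_swap; auto).
  assert (he2 : Ext c1 c2) by (apply Ext_swap; auto).
  destruct (grow c2 hv2) as [c3 [hv3 [he3 [hna [hnb hlv]]]]].
  exists c3. split; auto. split. { eapply Ext_trans; eauto. eapply Ext_trans; eauto. }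
  pose proof he1 as [x1 [x2 [x3 _]]]. pose proof he2 as [y1 [y2 [y3 _]]].
  split; [lia|split; [lia|split; [lia|]]].
  intros w hw.
  pose proof (Ext_CW c2 c3 w hv2 hv3 he3 hw) as hw2.
  pose proof (Ext_CW c1 c2 _ hv1 hv2 he2 hw2) as hw1.
  pose proof hv1 as [_ [_ [_ [ha1 hb1]]]]. pose proof hv2 as [_ [_ [_ [ha2 hb2]]]].
  split.
  - pose proof (hav1 _ hw1) as h. simpl in h. rewrite (phx0 c1 c2 ha1), (phx0 c2 c3 ha2) in h. auto.
  - pose proof (CW_swap c2 _ hv2 hw2) as hs. unfold c2 in hs at 1. rewrite swap_swap in hs.
    pose proof (havd _ hs) as h. simpl in h. unfold phs in h.
    destruct (Nat.ltb_spec 0 (nbB c2)); [|lia]. replace (na c2 + 0) with (na c2) in h by lia.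
    rewrite phxa in h. auto.
Qed.

Fixpoint seqc (c0 : cond) (f : nat * cond -> cond) (k : nat) : cond :=
  match k with 0 => c0 | S k' => f (k', seqc c0 f k') end.

Section Lim.
Variable cs : nat -> cond.
Hypothesis hV : forall k, Valid (cs k).
Hypothesis hS : forall k, Ext (cs k) (cs (S k)).
Hypothesis hsz : forall k, k + 1 <= na (cs k) /\ k + 1 <= nbB (cs k) /\ k <= lv (cs k).

Lemma Echain k K : k <= K -> Ext (cs k) (cs K).
Proof.
  induction K; intros h.
  - assert (k = 0) by lia. subst. apply Ext_refl.
  - destruct (Nat.eq_dec k (S K)). subst. apply Ext_refl. eapply Ext_trans. apply IHK. lia. apply hS.
Qed.

Definition XA j t := sA (cs (t + j + 1)) j t.
Definition XB j t := sB (cs (t + j + 1)) j t.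

Lemma nb_big t K : t <= K -> t < nb (lv (cs (S K))).
Proof.
  intros h. destruct (hsz (S K)) as [_ [_ h3]]. assert (lv (cs (S K)) <= nb (lv (cs (S K)))) by apply nb_ge. lia.
Qed.

Lemma XA_agree k j : j < na (cs k) -> agree (nb (lv (cs k))) (XA j) (sA (cs k) j).
Proof.
  intros hj t ht. unfold XA. set (K := t + j + 1).
  destruct (le_lt_dec k K).
  - destruct (Echain k K l) as [_ [_ [_ [_ [_ [e6 _]]]]]]. apply e6; auto.
  - destruct (Echain K k ltac:(lia)) as [_ [_ [_ [_ [_ [e6 _]]]]]]. symmetry. apply e6.
    + destruct (hsz K); unfold K in *; lia.
    + unfold K. replace (t + j + 1) with (S (t + j)) by lia. apply nb_big. lia.
Qed.
Lemma XB_agree k j : j < nbB (cs k) -> agree (nb (lv (cs k))) (XB j) (sB (cs k) j).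
Proof.
  intros hj t ht. unfold XB. set (K := t + j + 1).
  destruct (le_lt_dec k K).
  - destruct (Echain k K l) as [_ [_ [_ [_ [_ [_ e7]]]]]]. apply e7; auto.
  - destruct (Echain K k ltac:(lia)) as [_ [_ [_ [_ [_ [_ e7]]]]]]. symmetry. apply e7.
    + destruct (hsz K) as [_ [h2 _]]; unfold K in *; lia.
    + unfold K. replace (t + j + 1) with (S (t + j)) by lia. apply nb_big. lia.
Qed.

Lemma acc_stage K j : j < jn (cs K) -> acceptable nb C (lv (cs K)) (jdata (cs K) j).
Proof. intros h. destruct (hV K) as [[_ [_ [_ [hacc _]]]] _]. auto. Qed.

Lemma XA_H k j : j < na (cs k) -> H nb C (XA j).
Proof.
  intros hj i. set (K := k + i + 1).
  assert (hE : Ext (cs k) (cs K)) by (apply Echain; unfold K; lia).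
  destruct hE as [_ [e2 _]].
  assert (hl : i < lv (cs K)) by (destruct (hsz K) as [_ [_ h]]; unfold K in *; lia).
  apply (memC_agree i (nb (lv (cs K))) (sA (cs K) j)).
  - apply nb_mono. lia.
  - apply agree_sym. apply XA_agree. lia.
  - assert (h := acc_stage K j ltac:(unfold jn; lia)). rewrite jdata_A in h by lia. apply h. auto.
Qed.
Lemma XB_H k j : j < nbB (cs k) -> H nb C (XB j).
Proof.
  intros hj i. set (K := k + i + 1).
  assert (hE : Ext (cs k) (cs K)) by (apply Echain; unfold K; lia).
  destruct hE as [_ [_ [e3 _]]].
  assert (hl : i < lv (cs K)) by (destruct (hsz K) as [_ [_ h]]; unfold K in *; lia).
  apply (memC_agree i (nb (lv (cs K))) (sB (cs K) j)).
  - apply nb_mono. lia.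
  - apply agree_sym. apply XB_agree. lia.
  - assert (h := acc_stage K (na (cs K) + j) ltac:(unfold jn; lia)). rewrite jdata_B in h. apply h. auto.
Qed.

Definition wk k j := if j <? na (cs k) then XA j else XB (j - na (cs k)).

Lemma wk_agree k K j : k <= K -> j < jn (cs k) ->
  agree (nb (lv (cs K))) (wk k j) (jdata (cs K) (phx (cs k) (cs K) j)).
Proof.
  intros hk hj. pose proof (Echain k K hk) as [e1 [e2 [e3 _]]]. unfold wk, phx, jn in *.
  destruct (Nat.ltb_spec j (na (cs k))).
  - rewrite jdata_A by lia. apply XA_agree. lia.
  - replace (j - na (cs k) + na (cs K)) with (na (cs K) + (j - na (cs k))) by lia. rewrite jdata_B.
    apply XB_agree. lia.
Qed.

Lemma limit_CW k : CW (cs k) (wk k).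
Proof.
  split; [|split].
  - intros j hj. unfold wk, jn in *. destruct (Nat.ltb_spec j (na (cs k))).
    + eapply XA_H; eauto.
    + apply (XB_H k). lia.
  - intros j hj. assert (e : phx (cs k) (cs k) j = j) by (unfold phx; destruct (Nat.ltb_spec j (na (cs k))); lia).
    pose proof (wk_agree k k j (le_n k) hj) as h. rewrite e in h. exact h.
  - intros j hj. set (K := j + k).
    pose proof (hV k) as [hsk [tA [tB [ha hb]]]].
    assert (hK : k <= K) by (unfold K; lia).
    assert (hlK : j <= lv (cs K)) by (destruct (hsz K) as [_ [_ h]]; unfold K in *; lia).
    pose proof (Ext_inS (cs k) (cs K) (hV k) (hV K) (Echain k K hK)) as hi.
    assert (hle : jn (cs k) <= nb j).
    { destruct hsk as [_ [_ [h _]]]. assert (nb (lv (cs k)) <= nb j) by (apply nb_mono; lia). lia. }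
    apply (inS_down _ _ _ (lv (cs K))); auto.
    assert (hjt : tree_mapping (jn (cs k)) (jpi (cs k))) by (apply join_tree; auto).
    assert (g1 : 1 <= jn (cs k)) by (unfold jn; lia).
    assert (g2 : jn (cs k) <= nb (lv (cs K))) by (assert (nb j <= nb (lv (cs K))) by (apply nb_mono; lia); lia).
    assert (g4 : edge_map (jn (cs k)) (jpi (cs k)) (jpi (cs k)) (fun j => j)) by (intros k' l m' E; right; left; auto).
    assert (g5 : forall i, i < jn (cs k) -> agree (nb (lv (cs K))) (wk k i) (jdata (cs K) (phx (cs k) (cs K) i))).
    { intros i hi'. apply wk_agree; auto. }
    exact (inS_transport _ _ _ _ _ _ (fun j => j) (wk k) hi hjt g1 g2 (fun i h => h) g4 g5).
Qed.

End Lim.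

Lemma core n0 p0 s0 i0 x (G : nat -> cset) : inS nb C P n0 p0 s0 i0 -> U nb C P n0 p0 s0 i0 x ->
  (forall k, tau_nowhere_dense nb C P (G k)) ->
  exists b1 b2, U nb C P n0 p0 s0 i0 b1 /\ U nb C P n0 p0 s0 i0 b2 /\ (forall k, ~ G k b1 /\ ~ G k b2) /\
    b1 <> b2 /\ forall N, inTstar P m N (cadd b1 b2).
Proof.
  intros hs hx hG.
  destruct (init _ _ _ _ _ hs hx) as [ci [hvi hUi]].
  destruct (separate ci hvi) as [c0 [hv0 [he0 hsep]]].
  destruct (fchoice (fun (pc : nat * cond) c' => Valid (snd pc) -> Valid c' /\ Ext (snd pc) c' /\
     na (snd pc) < na c' /\ nbB (snd pc) < nbB c' /\ lv (snd pc) < lv c' /\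
     forall w, CW c' w -> ~ G (fst pc) (w 0) /\ ~ G (fst pc) (w (na c')))) as [f hf].
  { intros [k c]. simpl. destruct (classic (Valid c)) as [hv|hv].
    - destruct (step c (G k) hv (hG k)) as [c' hc']. exists c'. auto.
    - exists c. intro; contradiction. }
  set (cs := seqc c0 f).
  assert (hV : forall k, Valid (cs k)).
  { induction k. exact hv0. exact (proj1 (hf (k, cs k) IHk)). }
  assert (hst : forall k, Valid (cs (S k)) /\ Ext (cs k) (cs (S k)) /\ na (cs k) < na (cs (S k)) /\
     nbB (cs k) < nbB (cs (S k)) /\ lv (cs k) < lv (cs (S k)) /\
     forall w, CW (cs (S k)) w -> ~ G k (w 0) /\ ~ G k (w (na (cs (S k))))).
  { intro k. exact (hf (k, cs k) (hV k)). }
  assert (hsz : forall k, k + 1 <= na (cs k) /\ k + 1 <= nbB (cs k) /\ k <= lv (cs k)).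
  { induction k.
    - change (cs 0) with c0. destruct hv0 as [_ [_ [_ [h1 h2]]]]. lia.
    - destruct (hst k) as [_ [_ [h1 [h2 [h3 _]]]]]. lia. }
  assert (hS : forall k, Ext (cs k) (cs (S k))) by (intro k; apply hst).
  pose proof (limit_CW cs hV hS hsz) as hW.
  pose proof hv0 as [_ [_ [_ [ha0 hb0]]]].
  assert (e2 : forall k, wk cs k (na (cs k)) = XB cs 0).
  { intro k. unfold wk. destruct (Nat.ltb_spec (na (cs k)) (na (cs k))); [lia|]. f_equal; lia. }
  assert (e3 : forall k, wk cs k 0 = XA cs 0).
  { intro k. unfold wk. destruct (Nat.ltb_spec 0 (na (cs k))); [auto|]. destruct (hsz k); lia. }
  exists (XA cs 0), (XB cs 0).
  pose proof (Ext_CW ci c0 _ hvi hv0 he0 (hW 0)) as hWi.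
  pose proof hvi as [_ [_ [_ [hai _]]]].
  destruct (hUi _ hWi) as [u1 u2]. rewrite phx0 in u1 by auto. rewrite phxa in u2.
  change (cs 0) with c0 in *.
  split; [|split; [|split; [|split]]].
  - rewrite <- (e3 0). exact u1.
  - rewrite <- (e2 0). exact u2.
  - intro k. destruct (hst k) as [_ [_ [_ [_ [_ h]]]]]. destruct (h _ (hW (S k))) as [g1 g2].
    rewrite e3 in g1. rewrite e2 in g2. auto.
  - intro e. apply (hsep _ (hW 0)). rewrite e2, e3. auto.
  - intro N. apply (inT_mono _ _ (nb (S (N + lv c0)))).
    + assert (S (N + lv c0) <= nb (S (N + lv c0))) by apply nb_ge. lia.
    + rewrite <- (e3 0), <- (e2 0). apply (Valid_edgesX c0 (wk cs 0) (hW 0)). lia.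
Qed.
End Main.

Theorem proposition2p7
  (nb : nat -> nat) (C : nat -> cset) (P : nat -> cset)
  (hn0 : nb 0 = 0)
  (hninc : forall i, nb i < nb (S i))
  (hCin : forall (i : nat) (s : nat -> cantor),
      exists t, forall k, k <= nb i -> memC nb C i (cadd t (s k)))
  (hCout : forall (i : nat) (s : nat -> cantor),
      exists t, forall k, k <= nb i -> ~ memC nb C i (cadd t (s k)))
  (hP : forall m, perfect_nonempty (P m))
  (B : cset)
  (hBH : subset B (H nb C))
  (hBnm : ~ tau_meager nb C P B)
  (hBbp : tau_baire_property nb C P B) :
  forall m, exists x y, P m x /\ P m y /\ x <> y /\
    exists z, translate B x z /\ translate B y z.
Proof.
  intros m. destruct hBbp as [O [hOo [G [hGnd hGsub]]]].
  assert (hx : exists x, O x).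
  { apply NNPP. intro hno. apply hBnm. exists G. split; auto. intros x hx. apply hGsub. left. split; auto.
    intro hO. apply hno. eauto. }
  destruct hx as [x hx]. destruct hOo as [_ hOo].
  destruct (hOo x hx) as [n0 [p0 [s0 [i0 [hs [hUx hsub]]]]]].
  destruct (core nb C P hn0 hninc hCin hP m n0 p0 s0 i0 x G hs hUx hGnd) as [b1 [b2 [u1 [u2 [hav [hne hT]]]]]].
  assert (hB : forall b, U nb C P n0 p0 s0 i0 b -> (forall k, ~ G k b) -> B b).
  { intros b hb hg. apply NNPP. intro hnb. destruct (hGsub b) as [k hk].
    right. split; auto. apply (hg k hk). }
  destruct (hP m) as [_ [hcl _]].
  destruct (closed_sum (P m) hcl (cadd b1 b2)) as [p [q [hp [hq hpq]]]].
  { intro N. destruct (hT N) as [z [[x1 [y1 [h1 [h2 e]]]] ha]]. exists x1, y1. split; auto. split; auto.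
    rewrite <- e. auto. }
  assert (B1 : B b1) by (apply hB; auto; intro k; apply hav).
  assert (B2 : B b2) by (apply hB; auto; intro k; apply hav).
  exists p, q. split; auto. split; auto. split.
  - intro e. subst q. apply hne. apply functional_extensionality. intro t. specialize (hpq t).
    unfold cadd in hpq. rewrite xorb_nilpotent in hpq. destruct (b1 t), (b2 t); simpl in *; congruence.
  - exists (cadd b1 p). split.
    + exists b1. auto.
    + exists b2. split; auto. apply functional_extensionality. intro t. specialize (hpq t).
      unfold cadd in *. destruct (b1 t), (b2 t), (p t), (q t); simpl in *; congruence.
Qed.
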